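(* Let $S$ be a finite set of points in $\mathbb{R}^d$ with Euclidean distance, $f\ge0$ an integer, $0<\theta<\pi/4$, $\mathcal{C}$ a cone collection as in the context, and $\Theta=\Theta(\theta,2f+1)$. Let $F$ be a set of edges of $\Theta$ such that $(S,F)$ has maximum degree at most $f$. Let $\{p,q\}$ be an edge of $K_S\setminus F$ that is not an edge of $\Theta$, and let $C\in\mathcal{C}$ be a cone with $q\in C+p$. Then there is a point $r\in S_{p,C}$ such that: $r\ne q$; the orthogonal projection of $r$ onto the ray $\ell_C+p$ is at least as close to $p$ as the orthogonal projection of $q$ onto $\ell_C+p$; $\{p,r\}$ is an edge of $\Theta\setminus F$; and $\{r,q\}$ is an edge of $K_S\setminus F$.
   Context: $K_S$ is the complete graph on $S$ with edge weights the Euclidean distances; $X\setminus F$ is $X$ with the edges of $F$ removed. $\mathcal{C}$ is a finite collection of cones with apex at the origin covering $\mathbb{R}^d$, each of angular diameter at most $\theta$, i.e. $\max\{\angle(0x,0y):x,y\in C\setminus\{0\}\}\le\theta$. For each $C\in\mathcal{C}$ fix a ray $\ell_C$ from the origin contained in $C$. For $p\in S$: $C+p=\{x+p:x\in C\}$, $\ell_C+p$ is the translate of $\ell_C$ emanating from $p$, and $S_{p,C}=(C+p)\cap(S\setminus\{p\})$. The graph $\Theta(\theta,k)$ has vertex set $S$, and for each $p\in S$ and $C\in\mathcal{C}$ it contains an edge from $p$ to each of $\min(k,|S_{p,C}|)$ points of $S_{p,C}$ whose orthogonal projections onto $\ell_C+p$ are closest to $p$ (ties broken arbitrarily). *)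

(* Defs.v *)
From HB Require Import structures.
From mathcomp Require Import all_boot all_order all_algebra.
From mathcomp Require Import boolp classical_sets reals trigo.
Set Implicit Arguments. Unset Strict Implicit. Unset Printing Implicit Defensive.
Import Order.TTheory GRing.Theory Num.Theory.
Local Open Scope ring_scope.

Section Defs.
Variables (R : realType) (d : nat).
Notation pt := 'rV[R]_d.

Definition dotv (x y : pt) : R := (x *m y^T) 0 0.
Definition enorm (x : pt) : R := Num.sqrt (dotv x x).
Definition edist (x y : pt) : R := enorm (x - y).

Definition vangle (x y : pt) : R := acos (dotv x y / (enorm x * enorm y)).

Definition is_cone (C : set pt) : Prop :=
  forall (x : pt) (t : R), C x -> 0 <= t -> C (t *: x).

Definition ang_diam_le (C : set pt) (theta : R) : Prop :=
  forall x y : pt, C x -> C y -> x != 0 -> y != 0 -> vangle x y <= theta.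

(* A finite collection of cones (indexed by a finType I) covering R^d, each of
   angular diameter at most theta, with for each cone a chosen ray
   l_C = {t u | t >= 0} (u <> 0) contained in it. *)
Definition cone_collection (I : finType) (C : I -> set pt) (u : I -> pt)
    (theta : R) : Prop :=
  [/\ forall i, is_cone (C i),
      forall i, ang_diam_le (C i) theta,
      forall x : pt, exists i, C i x,
      forall i, u i != 0 &
      forall i (t : R), 0 <= t -> C i (t *: u i)].

(* Orthogonal projection of x onto the ray l + p = {p + t u | t >= 0}
   (the nearest point of the closed ray). *)
Definition proj_ray (u p x : pt) : pt :=
  p + (Num.max 0 (dotv (x - p) u / dotv u u)) *: u.

Variables (V : finType) (pos : V -> pt) (I : finType) (C : I -> set pt)
          (u : I -> pt).

Definition SpC (p : V) (i : I) : {set V} :=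
  [set v | (v != p) && `[< C i (pos v - pos p) >]].

Definition pdist (p : V) (i : I) (v : V) : R :=
  edist (proj_ray (u i) (pos p) (pos v)) (pos p).

(* sel is a valid choice of Theta(theta,k)-neighbours: for each p and cone i,
   sel p i consists of min(k, |S_{p,C}|) points of S_{p,C} whose projections
   are closest to p (ties broken arbitrarily). *)
Definition theta_selection (k : nat) (sel : V -> I -> {set V}) : Prop :=
  forall p i,
    [/\ sel p i \subset SpC p i,
        #|sel p i| = minn k #|SpC p i| &
        forall x y, x \in sel p i -> y \in SpC p i :\: sel p i ->
          pdist p i x <= pdist p i y].

Definition theta_edge (sel : V -> I -> {set V}) (a b : V) : Prop :=
  exists i, (b \in sel a i) \/ (a \in sel b i).

End Defs.

(* Main.v *)
Require Import Defs.
From HB Require Import structures.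
From mathcomp Require Import all_boot all_order all_algebra.
From mathcomp Require Import boolp classical_sets reals trigo.
Import Order.TTheory GRing.Theory Num.Theory.
Local Open Scope ring_scope.

Lemma set2_injr (T : finType) (p : T) : injective (fun r : T => [set p; r]).
Proof.
move=> r r' /setP H.
have := H r; rewrite !inE eqxx orbT => /esym /orP[/eqP rp|/eqP //].
have := H r'; rewrite !inE eqxx orbT rp => /orP[/eqP //|/eqP //].
Qed.

Lemma set2_injl (T : finType) (q : T) : injective (fun r : T => [set r; q]).
Proof.
move=> r r' /setP H.
have := H r; rewrite !inE eqxx /= => /esym /orP[/eqP //|/eqP rq].
have := H r'; rewrite !inE eqxx rq /= => /orP[/eqP //|/eqP //]; by rewrite rq.
Qed.

Lemma card_bad (V : finType) (F : {set {set V}}) (A : {set V}) (g : V -> {set V}) (v : V) :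
  injective g -> (forall r, v \in g r) ->
  (#|[set r in A | g r \in F]| <= #|[set e in F | v \in e]|)%N.
Proof.
move=> ig gv.
rewrite -(card_imset _ ig); apply: subset_leq_card.
apply/fintype.subsetP => e /imsetP[r]; rewrite inE => /andP[_ rF] ->.
by rewrite inE rF gv.
Qed.

Theorem lemma10 (R : realType) (d : nat)
  (V : finType) (pos : V -> 'rV[R]_d) (pos_inj : injective pos)
  (f : nat) (theta : R) (theta_pos : 0 < theta) (theta_lt : theta < pi / 4)
  (I : finType) (C : I -> set 'rV[R]_d) (u : I -> 'rV[R]_d)
  (hC : cone_collection C u theta)
  (sel : V -> I -> {set V}) (hsel : theta_selection pos C u (2 * f).+1 sel)
  (F : {set {set V}})
  (hF : forall e, e \in F -> exists a b, [/\ e = [set a; b], a != b & theta_edge sel a b])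
  (hdeg : forall v : V, (#|[set e in F | v \in e]| <= f)%N)
  (p q : V) (hpq : p != q) (hpqF : [set p; q] \notin F)
  (hpqT : ~ theta_edge sel p q)
  (i : I) (hq : C i (pos q - pos p)) :
  exists r : V,
    [/\ r \in SpC pos C p i,
        r != q,
        pdist pos u p i r <= pdist pos u p i q,
        theta_edge sel p r /\ [set p; r] \notin F &
        r != q /\ [set r; q] \notin F].
Proof.
have [hsub hcard hle] := hsel p i.
have qS : q \in SpC pos C p i by rewrite inE eq_sym hpq; apply/asboolP.
have qnsel : q \notin sel p i by apply/negP => qs; apply: hpqT; exists i; left.
have qD : q \in SpC pos C p i :\: sel p i by rewrite inE qnsel qS.
set A := sel p i in hsub hcard hle qnsel qD *.
have cardA : #|A| = (2 * f).+1.
  move: hcard; rewrite /minn; case: ltnP => // h1 h2.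
  have eA : A = SpC pos C p i by apply/eqP; rewrite eqEcard hsub h2 leqnn.
  by move: qnsel; rewrite eA qS.
pose B1 := [set r in A | [set p; r] \in F].
pose B2 := [set r in A | [set r; q] \in F].
have c1 : (#|B1| <= f)%N := leq_trans (@card_bad V F A _ p (@set2_injr V p) (fun r => set21 p r)) (hdeg p).
have c2 : (#|B2| <= f)%N := leq_trans (@card_bad V F A _ q (@set2_injl V q) (fun r => set22 r q)) (hdeg q).
have : ~~ (A \subset B1 :|: B2).
  apply/negP => /subset_leq_card; rewrite cardA => h.
  have := leq_trans h (leq_trans (leq_card_setU B1 B2) (leq_add c1 c2)).
  by rewrite mul2n -addnn ltnn.
case/fintype.subsetPn => r rA; rewrite !inE rA /= negb_or => /andP[n1 n2].
have rq : r != q by apply/negP => /eqP rq; move: qnsel; rewrite -rq rA.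
exists r; split => //.
- exact: (fintype.subsetP hsub).
- exact: hle.
- by split => //; exists i; left.
Qed.
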